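(* Let $n$ be a positive integer. (a) $\mu(n,2)=\lceil 2n/3\rceil$. (b) If $n\ge 2$, then $\mu^*(n,2)=2\lceil n/3\rceil$, and this is the least even integer not less than $\mu(n,2)$.
   Context: Let $\mathbb F_2=\{0,1\}$ be the field with two elements. For $u\in\mathbb F_2^n$, $|u|$ denotes the Hamming weight of $u$ (the number of entries equal to $1$). A wiring on $n$ vertices is a matrix $W=(w_{i,j})\in M(n,n;\mathbb F_2)$ with $w_{i,i}=1$ for all $i$ (pressing button $j$ toggles bulb $i$ iff $w_{i,j}=1$). The degree of vertex $j$ is the number of $1$s in the $j$th column of $W$, and $\deg(W)$ is the maximum degree over all vertices. For $c\in\mathbb F_2^n$ (initial configuration), $M(W,c)=\max\{|Wx+c| : x\in\mathbb F_2^n\}$. For $n,m\ge1$, $A(n,m)$ is the set of wirings on $n$ vertices with $\deg(W)\le m$; for $n\ge m$, $A^*(n,m)$ is the set of wirings on $n$ vertices in which every vertex has degree exactly $m$. Define $\mu(n,m)=\min\{M(W,0): W\in A(n,m)\}$ and, for $n\ge m$, $\mu^*(n,m)=\min\{M(W,0): W\in A^*(n,m)\}$. *)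

(* Defs.v *)
From mathcomp Require Import all_boot all_order all_algebra.
Set Implicit Arguments. Unset Strict Implicit. Unset Printing Implicit Defensive.
Import GRing.Theory.
Local Open Scope ring_scope.

Definition hwt (n : nat) (u : 'cV['F_2]_n) : nat := #|[set i | u i 0 != 0]|.

Definition is_wiring (n : nat) (W : 'M['F_2]_n) : bool := [forall i, W i i == 1].

Definition vdeg (n : nat) (W : 'M['F_2]_n) (j : 'I_n) : nat := #|[set i | W i j != 0]|.

Definition wdeg (n : nat) (W : 'M['F_2]_n) : nat := (\max_(j : 'I_n) vdeg W j)%N.

Definition Mval (n : nat) (W : 'M['F_2]_n) (c : 'cV['F_2]_n) : nat :=
  (\max_(x : 'cV['F_2]_n) hwt (W *m x + c))%N.

Definition inA (n m : nat) (W : 'M['F_2]_n) : bool := is_wiring W && (wdeg W <= m)%N.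
Definition inAstar (n m : nat) (W : 'M['F_2]_n) : bool :=
  is_wiring W && [forall j, vdeg W j == m].

(* minimum of M(W,0) over a set of wirings; the default value n is only used
   if the set is empty, which never happens in the theorem's range. *)
Definition minM (n : nat) (P : pred 'M['F_2]_n) : nat :=
  (\big[minn/n]_(W : 'M['F_2]_n | P W) Mval W 0)%N.

Definition mu (n m : nat) : nat := minM (@inA n m).
Definition mu_star (n m : nat) : nat := minM (@inAstar n m).

Definition ceil_div (a b : nat) : nat := ((a + b.-1) %/ b)%N.

(* Main.v *)
Require Import Defs.
From mathcomp Require Import all_boot all_order all_algebra.
From mathcomp Require Import zify.
Set Implicit Arguments. Unset Strict Implicit. Unset Printing Implicit Defensive.
Import GRing.Theory.
Local Open Scope ring_scope.


Lemma F2_1 (x : 'F_2) : x != 0 -> x = 1.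
Proof. by case: x => [[|[|k]] hk] //= H; apply/eqP. Qed.
Lemma F2_2 (x : 'F_2) : x + x = 0.
Proof. by case: x => [[|[|k]] hk] //=; apply/eqP. Qed.
Lemma F2_nat k : (k%:R : 'F_2) = (odd k)%:R.
Proof. elim: k => // k IH. rewrite mulrS IH /=. by case: (odd k) => /=; apply/eqP. Qed.
Lemma F2_b (b : bool) : ((b%:R : 'F_2) != 0) = b.
Proof. by case: b. Qed.

Lemma addxx n (u : 'cV['F_2]_n) : u + u = 0.
Proof. by apply/matrixP => i j; rewrite !mxE F2_2. Qed.

Definition ee n (i : 'I_n) : 'cV['F_2]_n := delta_mx i 0.
Definition Wh n (h : 'I_n -> 'I_n) : 'M['F_2]_n :=
  \matrix_(i, j) ((i == j) || (i == h j))%:R.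
Definition inIm n (W : 'M['F_2]_n) (u : 'cV['F_2]_n) := exists y, W *m y = u.

Lemma inIm0 n (W : 'M['F_2]_n) : inIm W 0.
Proof. by exists 0; rewrite mulmx0. Qed.
Lemma inImD n (W : 'M['F_2]_n) u v : inIm W u -> inIm W v -> inIm W (u + v).
Proof. by move=> [y <-] [z <-]; exists (y + z); rewrite mulmxDr. Qed.

Lemma ee_entry n (b i : 'I_n) : ee b i 0 = (i == b)%:R.
Proof. by rewrite /ee mxE eqxx andbT. Qed.

Lemma hwt_flip n (v : 'cV['F_2]_n) b : v b 0 = 0 -> hwt (v + ee b) = (hwt v).+1.
Proof.
move=> hb; rewrite /hwt.
have -> : [set i | (v + ee b) i 0 != 0] = b |: [set i | v i 0 != 0].
  apply/setP=> i; rewrite !inE !mxE eqxx andbT.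
  case: (eqVneq i b) => [->|nib] /=; first by rewrite hb add0r.
  by rewrite addr0.
by rewrite cardsU1 inE hb eqxx.
Qed.

Lemma Wh_ee n (h : 'I_n -> 'I_n) j : Wh h *m ee j = \col_i ((i == j) || (i == h j))%:R.
Proof. by rewrite /ee -colE; apply/matrixP => i k; rewrite !mxE. Qed.

Lemma inIm_edge n (h : 'I_n -> 'I_n) j : inIm (Wh h) (ee j + ee (h j)).
Proof.
case: (eqVneq (h j) j) => [->|hj]; first by rewrite addxx; apply: inIm0.
exists (ee j); rewrite Wh_ee; apply/matrixP => i k; rewrite (ord1 k) !mxE eqxx !andbT.
case: (eqVneq i j) => [->|ij] /=; first by rewrite eq_sym (negbTE hj) addr0.
by rewrite add0r.
Qed.

Lemma inIm_root n (h : 'I_n -> 'I_n) j : h j = j -> inIm (Wh h) (ee j).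
Proof.
move=> hj; exists (ee j); rewrite Wh_ee; apply/matrixP => i k; rewrite (ord1 k) !mxE eqxx !andbT.
by rewrite hj orbb.
Qed.

Lemma inIm_iter n (h : 'I_n -> 'I_n) p m : inIm (Wh h) (ee p + ee (iter m h p)).
Proof.
elim: m => [|m IH] /=; first by rewrite addxx; apply: inIm0.
have -> : ee p + ee (h (iter m h p)) =
   (ee p + ee (iter m h p)) + (ee (iter m h p) + ee (h (iter m h p))).
  by rewrite addrA -(addrA (ee p)) addxx addr0.
by apply: inImD => //; apply: inIm_edge.
Qed.


Lemma aux_rows (T : eqType) (h : T -> T) (b k : T) : h (h b) = b ->
  ((k != b) && (k != h b) && ((h k == b) || (h k == h b))) = false ->
  ((b == k) || (b == h k)) = ((h b == k) || (h b == h k)).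
Proof.
move=> E N.
case: (eqVneq k b) => [->|kb]; first by rewrite !eqxx !orbT.
case: (eqVneq k (h b)) => [->|khb]; first by rewrite E !eqxx !orbT.
rewrite kb khb /= in N; move/norP: N => [N1 N2].
rewrite ![b == _]eq_sym ![h b == _]eq_sym.
by rewrite (negbTE N1) (negbTE N2).
Qed.

Lemma lower_core n (h : 'I_n -> 'I_n) (x0 : 'cV['F_2]_n)
  (Hmax : forall y, (hwt (Wh h *m y) <= hwt (Wh h *m x0))%N) :
  (3 * #|[set i | ((Wh h *m x0) i 0 == 0)%R]| <= n)%N.
Proof.
set v := Wh h *m x0.
set O := [set i | v i 0 == 0].
have C1 : forall b, b \in O -> ~ inIm (Wh h) (ee b).
  move=> b; rewrite inE => /eqP hb [y Hy].
  have E : hwt (v + ee b) = (hwt v).+1 := hwt_flip hb.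
  have := Hmax (x0 + y); rewrite mulmxDr Hy -/v E; lia.
have C2 : forall b b', b \in O -> b' \in O -> b != b' -> ~ inIm (Wh h) (ee b + ee b').
  move=> b b'; rewrite !inE => /eqP hb /eqP hb' nbb' [y Hy].
  have E1 : hwt (v + ee b) = (hwt v).+1 := hwt_flip hb.
  have hb2 : (v + ee b) b' 0 = 0.
    by rewrite mxE ee_entry eq_sym (negbTE nbb') hb' addr0.
  have E2 : hwt (v + ee b + ee b') = (hwt (v + ee b)).+1 := hwt_flip hb2.
  have := Hmax (x0 + y); rewrite mulmxDr Hy -/v addrA E2 E1; lia.
have F3 : forall b b' s t, b \in O -> b' \in O -> iter s h b = iter t h b' -> b = b'.
  move=> b b' s t Hb Hb' E.
  case: (eqVneq b b') => // nbb'; exfalso; apply: (C2 b b') => //.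
  have := inImD (inIm_iter h b s) (inIm_iter h b' t).
  by rewrite E addrACA addxx addr0.
have F1a : forall b, b \in O -> h b != b.
  by move=> b Hb; apply/eqP => E; apply: (C1 b) => //; exact: inIm_root.
have F1b : forall b, b \in O -> h (h b) != h b.
  move=> b Hb; apply/eqP => E; apply: (C1 b Hb).
  have := inImD (inIm_iter h b 1) (inIm_root E).
  by rewrite /= -addrA addxx addr0.
have F2 : forall b, b \in O -> h b \notin O.
  move=> b Hb; apply/negP => Hhb; apply: (C2 b (h b)) => //.
    by rewrite eq_sym F1a.
  exact: (inIm_iter h b 1).
pose P b j := (j != b) && (j != h b) && ((h j == b) || (h j == h b)).
have jex : forall b, b \in O -> h (h b) = b -> exists j, P b j.
  move=> b Hb E; case: (pickP (P b)) => [j Hj|N]; first by exists j.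
  exfalso; move: (F2 b Hb); rewrite inE; move: Hb; rewrite inE => /eqP Hb.
  suff -> : v (h b) 0 = v b 0 by rewrite Hb eqxx.
  rewrite !mxE; apply: eq_bigr => k _; rewrite !mxE.
  by rewrite (aux_rows E (N k)).
pose c b := if h (h b) != b then h (h b) else odflt b [pick j | P b j].
have Hc : forall b, b \in O ->
  [/\ c b != b, c b != h b & exists s t, iter s h (c b) = iter t h b].
  move=> b Hb; rewrite /c; case: ifP => [E|/negbFE/eqP E].
    by split => //; [exact: F1b | exists 0%N, 2%N].
  case: pickP => [j /andP[/andP[jb jhb] Hj] | N] /=.
    split => //; case/orP: Hj => /eqP Hj; first by exists 1%N, 0%N.
    by exists 1%N, 1%N.
  by exfalso; have [j Hj] := jex b Hb E; rewrite N in Hj.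
pose psi (p : 'I_n * 'I_3) :=
  if val p.2 == 0%N then p.1 else if val p.2 == 1%N then h p.1 else c p.1.
have Hreach : forall b k, b \in O -> exists s t, iter s h (psi (b, k)) = iter t h b.
  move=> b k Hb; rewrite /psi /=.
  case: ifP => _; first by exists 0%N, 0%N.
  case: ifP => _; first by exists 0%N, 1%N.
  by have [_ _] := Hc b Hb.
have Hinj : {in setX O [set: 'I_3] &, injective psi}.
  move=> [b k] [b' k'] /setXP [Hb _] /setXP [Hb' _] E.
  have [s [t Rs]] := Hreach b k Hb.
  have [s' [t' Rs']] := Hreach b' k' Hb'.
  have Ebb : b = b'.
    apply: (F3 b b' (s' + t)%N (s + t')%N Hb Hb').
    rewrite !iterD -Rs -Rs' E -!iterD addnC //.
  subst b'; clear Rs Rs' s t s' t'.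
  have [c1 c2 _] := Hc b Hb.
  have d1 := F1a b Hb.
  have D1 : b != h b by rewrite eq_sym.
  have D2 : b != c b by rewrite eq_sym.
  have D3 : h b != c b by rewrite eq_sym.
  move: E; rewrite /psi /=.
  case: k => [[|[|[|?]]] pk] //; case: k' => [[|[|[|?]]] pk'] //= E;
    first [by congr (_, _); apply/val_inj
          | move/eqP: E => E; first [by rewrite E in D1 | by rewrite eq_sym E in D1
             | by rewrite E in D2 | by rewrite eq_sym E in D2
             | by rewrite E in D3 | by rewrite eq_sym E in D3]].
have := card_in_imset Hinj; rewrite cardsX cardsT card_ord => Hc3.
by rewrite mulnC -Hc3 -[X in (_ <= X)%N]card_ord max_card.
Qed.


Lemma block_sum n (h : 'I_n -> 'I_n) (B : {set 'I_n})
  (HB : forall j, (h j \in B) = (j \in B)) (Hf : forall j, j \in B -> h j != j)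
  (x : 'cV['F_2]_n) : \sum_(i in B) (Wh h *m x) i 0 = 0.
Proof.
transitivity (\sum_(i in B) \sum_k Wh h i k * x k 0).
  by apply: eq_bigr => i _; rewrite mxE.
rewrite exchange_big /=; apply: big1 => k _; rewrite -mulr_suml.
suff -> : \sum_(i in B) Wh h i k = 0 by rewrite mul0r.
case: (boolP (k \in B)) => kB.
  have hk := Hf k kB.
  rewrite (bigD1 k) //= (bigD1 (h k)) /=; last by rewrite HB kB.
  rewrite big1 => [|i /andP[/andP[iB ik] ihk]]; last first.
    by rewrite mxE (negbTE ik) (negbTE ihk).
  by rewrite !mxE !eqxx orbT addr0 F2_2.
apply: big1 => i iB; rewrite mxE.
have ik : (i == k) = false by apply/negbTE; apply: contraNneq kB => <-.
have ihk : (i == h k) = false.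
  by apply/negbTE; apply: contraNneq kB => E; rewrite -HB -E.
by rewrite ik ihk.
Qed.

Lemma sum_hwt n (v : 'cV['F_2]_n) : \sum_i v i 0 = (hwt v)%:R.
Proof.
rewrite (bigID (fun i => v i 0 != 0)) /= [X in _ + X]big1 => [|i /negbNE/eqP //].
rewrite addr0 /hwt -sumr_const; apply: eq_big => [i|i /F2_1 //].
by rewrite inE.
Qed.

Lemma hwt_even n (h : 'I_n -> 'I_n) (Hf : forall j, h j != j) x :
  ~~ odd (hwt (Wh h *m x)).
Proof.
have HB : forall j, (h j \in [set: 'I_n]) = (j \in [set: 'I_n]) by move=> j; rewrite !inE.
have := block_sum HB (fun j _ => Hf j) x.
have -> : \sum_(i in [set: 'I_n]) (Wh h *m x) i 0 = \sum_i (Wh h *m x) i 0.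
  by apply: eq_bigl => i; rewrite inE.
by rewrite sum_hwt F2_nat; case: (odd _).
Qed.

Lemma Mval_ge n (h : 'I_n.+1 -> 'I_n.+1) :
  exists x0, Mval (Wh h) 0 = hwt (Wh h *m x0) /\
    (3 * (n.+1 - hwt (Wh h *m x0)) <= n.+1)%N /\ (hwt (Wh h *m x0) <= n.+1)%N.
Proof.
case: (@arg_maxnP _ (0 : 'cV['F_2]_n.+1) xpredT (fun x => hwt (Wh h *m x + 0)) isT)
  => x0 _ Hx.
have Hmax : forall y, (hwt (Wh h *m y) <= hwt (Wh h *m x0))%N.
  by move=> y; have := Hx y isT; rewrite !addr0.
have Hc := lower_core Hmax.
have HO : (hwt (Wh h *m x0) + #|[set i | ((Wh h *m x0) i 0 == 0)%R]| = n.+1)%N.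
  rewrite addnC -[X in _ = X](card_ord n.+1) -(cardsC [set i | ((Wh h *m x0) i 0 == 0)%R]).
  congr (_ + _)%N; rewrite /hwt; apply: eq_card => i; rewrite !inE //.
exists x0; split; last by split; lia.
apply/anti_leq/andP; split.
  by apply/bigmax_leqP => x _; rewrite addr0 (Hmax x).
by have := @leq_bigmax _ (fun x => hwt (Wh h *m x + 0)) x0; rewrite addr0.
Qed.


Lemma card3 (T : finType) (a b c : T) : a != b -> a != c -> b != c ->
  #|[set a; b; c]| = 3%N.
Proof.
move=> ab ac bc; rewrite -setUA cardsU1 cards2 bc !inE negb_or ab ac.
by [].
Qed.

Lemma W_to_Wh n (W : 'M['F_2]_n) : is_wiring W -> (forall j, (vdeg W j <= 2)%N) ->
  exists h, W = Wh h /\ (forall j, (vdeg W j == 2%N) -> h j != j).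
Proof.
move=> /forallP Hw Hd.
pose h j := odflt j [pick i | (i != j) && (W i j != 0)].
exists h; split; last first.
  move=> j /eqP Hj; rewrite /h; case: pickP => [i /andP[] //|N].
  exfalso.
  have : ([set i | W i j != 0] \subset [set j]).
    apply/subsetP => i; rewrite !inE => Hi; apply/negPn/negP => ij.
    by have := N i; rewrite ij Hi.
  move/subset_leq_card; rewrite cards1.
  by move: Hj; rewrite /vdeg => ->.
apply/matrixP => i j; rewrite mxE.
case: (eqVneq i j) => [->|ij] /=; first by rewrite (eqP (Hw j)).
rewrite /h; case: pickP => [i' /andP[i'j Hi'] | N] /=.
  case: (eqVneq (W i j) 0) => [Hij|Hij].
    rewrite Hij; case: (eqVneq i i') => // Ei.
    by rewrite -Ei Hij eqxx in Hi'.
  case: (eqVneq i i') => [_|ii']; first by rewrite (F2_1 Hij).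
  exfalso.
  have : [set j; i; i'] \subset [set k | W k j != 0].
    apply/subsetP => k; rewrite !inE => /orP[/orP[/eqP->|/eqP->]|/eqP->]; rewrite ?(eqP (Hw j)) //.
  have ji : j != i by rewrite eq_sym.
  have ji' : j != i' by rewrite eq_sym.
  move/subset_leq_card; rewrite card3 //.
  by have := Hd j; rewrite /vdeg; lia.
by have := N i; rewrite ij (negbTE ij) /= => /negbT; rewrite negbK => /eqP ->.
Qed.

Definition tri i := (3 * (i %/ 3) + (i %% 3).+1 %% 3)%N.

Lemma Mval_le n (t : nat) (h : 'I_n.+1 -> 'I_n.+1) (Ht : (3 * t <= n.+1)%N)
  (H1 : forall i : 'I_n.+1, (i < 3 * t)%N -> (h i : nat) = tri i)
  (H2 : forall i : 'I_n.+1, (3 * t <= i)%N -> (3 * t <= (h i : nat))%N) :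
  (Mval (Wh h) 0 <= n.+1 - t)%N.
Proof.
apply/bigmax_leqP => x _; rewrite addr0.
set v := Wh h *m x.
pose B (k : 'I_t) := [set i : 'I_n.+1 | (i %/ 3 == k)%N].
have Hex : forall k : 'I_t, exists i, (i \in B k) && (v i 0 == 0).
  move=> k.
  have HB : forall j, (h j \in B k) = (j \in B k).
    move=> j; rewrite !inE; case: (ltnP j (3 * t)) => hj.
      by rewrite H1 // /tri; congr (_ == _); lia.
    have := H2 j hj; have := ltn_ord k; lia.
  have Hf : forall j, j \in B k -> h j != j.
    move=> j; rewrite inE => /eqP Hj; apply/eqP => E.
    have hj : (j < 3 * t)%N by have := ltn_ord k; lia.
    by have := H1 j hj; rewrite E /tri; lia.
  have := block_sum HB Hf x; rewrite -/v => Hs.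
  case: (boolP [exists i, (i \in B k) && (v i 0 == 0)]) => [/existsP //|/existsPn N].
  exfalso.
  have E3 : \sum_(i in B k) v i 0 = #|B k|%:R.
    rewrite -sumr_const; apply: eq_bigr => i iB; apply: F2_1.
    by have := N i; rewrite iB.
  have C3 : #|B k| = 3%N.
    have -> : B k = [set inord (3 * k); inord (3 * k + 1); inord (3 * k + 2)].
      apply/setP => i; rewrite !inE -!val_eqE /= !inordK; first lia;
      have := ltn_ord k; lia.
    rewrite card3 //.
    all: try (rewrite -val_eqE /= !inordK; have := ltn_ord k; lia).
  by move: E3; rewrite Hs C3 => /eqP.
pose o (k : 'I_t) := odflt ord0 [pick i | (i \in B k) && (v i 0 == 0)].
have Ho : forall k, (o k \in B k) && (v (o k) 0 == 0).
  move=> k; rewrite /o; case: pickP => [i //|N].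
  by have [i Hi] := Hex k; rewrite N in Hi.
set O := [set i | v i 0 == 0].
have HO : (hwt v + #|O| = n.+1)%N.
  rewrite addnC -[X in _ = X](card_ord n.+1) -(cardsC O).
  congr (_ + _)%N; rewrite /hwt; apply: eq_card => i; rewrite !inE //.
have Hinj : injective o.
  move=> k k' E; apply: ord_inj.
  move: (Ho k) (Ho k'); rewrite E !inE => /andP[/eqP H1' _] /andP[/eqP H2' _].
  by rewrite -H1' -H2'.
have : #|[set o k | k in 'I_t]| = t.
  by rewrite card_imset // card_ord.
have : [set o k | k in 'I_t] \subset O.
  by apply/subsetP => i /imsetP [k _ ->]; rewrite inE; case/andP: (Ho k).
move/subset_leq_card => Hle Hc.
lia.
Qed.


Lemma vdeg_Wh n (h : 'I_n -> 'I_n) j : vdeg (Wh h) j = #|[set j; h j]|.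
Proof. by apply: eq_card => i; rewrite !inE mxE F2_b. Qed.

Lemma Wh_inA n (h : 'I_n -> 'I_n) : @inA n 2 (Wh h).
Proof.
apply/andP; split.
  by apply/forallP => i; rewrite mxE eqxx.
by apply/bigmax_leqP => j _; rewrite vdeg_Wh cards2; case: (_ != _).
Qed.

Lemma Wh_inAstar n (h : 'I_n -> 'I_n) : (forall j, h j != j) -> @inAstar n 2 (Wh h).
Proof.
move=> Hf; apply/andP; split.
  by apply/forallP => i; rewrite mxE eqxx.
by apply/forallP => j; rewrite vdeg_Wh cards2 (eq_sym j) Hf.
Qed.

Lemma inA_Wh n (W : 'M['F_2]_n) : @inA n 2 W ->
  exists h, W = Wh h.
Proof.
case/andP => Hw Hd.
have Hd' : forall j, (vdeg W j <= 2)%N.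
  by move=> j; apply: leq_trans Hd; apply: (@leq_bigmax _ (fun j => vdeg W j)).
by have [h [-> _]] := W_to_Wh Hw Hd'; exists h.
Qed.

Lemma inAstar_Wh n (W : 'M['F_2]_n) : @inAstar n 2 W ->
  exists h, W = Wh h /\ forall j, h j != j.
Proof.
case/andP => Hw /forallP Hd.
have Hd' : forall j, (vdeg W j <= 2)%N by move=> j; rewrite (eqP (Hd j)).
have [h [E Hf]] := W_to_Wh Hw Hd'; exists h; split => // j.
exact: Hf (Hd j).
Qed.

Lemma LB1 n (W : 'M['F_2]_n.+1) : @inA n.+1 2 W -> (ceil_div (2 * n.+1) 3 <= Mval W 0)%N.
Proof.
move=> /inA_Wh [h ->].
have [x0 [-> [H1 H2]]] := Mval_ge h.
rewrite /ceil_div /=; lia.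
Qed.

Lemma LB2 n (W : 'M['F_2]_n.+1) : @inAstar n.+1 2 W ->
  (2 * ceil_div n.+1 3 <= Mval W 0)%N.
Proof.
move=> /inAstar_Wh [h [-> Hf]].
have [x0 [-> [H1 H2]]] := Mval_ge h.
have := hwt_even Hf x0.
rewrite /ceil_div /=; lia.
Qed.

Lemma minM_ge n (P : pred 'M['F_2]_n) c : (c <= n)%N ->
  (forall W, P W -> (c <= Mval W 0)%N) -> (c <= minM P)%N.
Proof.
move=> Hn HP; rewrite /minM.
apply: (big_ind (fun m => c <= m)%N) => //.
  by move=> a b Ha Hb; rewrite leq_min Ha Hb.
Qed.

Lemma bigmin_seq_le (T : eqType) (r : seq T) (P : pred T) (F : T -> nat) d w :
  w \in r -> P w -> (\big[minn/d]_(i <- r | P i) F i <= F w)%N.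
Proof.
elim: r => // a r IH; rewrite inE big_cons => /orP [/eqP <-|Hr] Pw.
  by rewrite Pw geq_minl.
case: ifP => _; last exact: IH.
by apply: leq_trans (geq_minr _ _) (IH Hr Pw).
Qed.

Lemma minM_le n (P : pred 'M['F_2]_n) W : P W -> (minM P <= Mval W 0)%N.
Proof.
by move=> HW; rewrite /minM; apply: bigmin_seq_le => //; rewrite mem_index_enum.
Qed.

Lemma UB1 n : (mu n.+1 2 <= n.+1 - n.+1 %/ 3)%N.
Proof.
set t := (n.+1 %/ 3)%N.
pose h (i : 'I_n.+1) : 'I_n.+1 := inord (if (i < 3 * t)%N then tri i else i).
apply: leq_trans (minM_le (Wh_inA h)) _.
apply: Mval_le.
- rewrite /t; lia.
- move=> i hi; rewrite /h hi inordK // /tri; rewrite /t in hi; lia.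
- move=> i hi; rewrite /h ltnNge hi /= inordK //; exact: ltn_ord.
Qed.

Lemma UB2 n : (1 <= n)%N -> (mu_star n.+1 2 <= 2 * ceil_div n.+1 3)%N.
Proof.
move=> hn.
set t := (if (n.+1 %% 3 == 1)%N then n.+1 %/ 3 - 1 else n.+1 %/ 3)%N.
have Ht : (3 * t <= n.+1)%N /\ ~~ odd (n.+1 - 3 * t) /\ (n.+1 - t = 2 * ceil_div n.+1 3)%N.
  rewrite /t /ceil_div /=; case: ifP => /eqP; lia.
case: Ht => Ht1 [Ht2 Ht3].
pose f (i : nat) := (if (i < 3 * t)%N then tri i
                     else if odd (i - 3 * t) then i.-1 else i.+1)%N.
have Hf : forall i : 'I_n.+1, (f i < n.+1)%N /\ f i != i /\
   ((i < 3 * t)%N -> f i = tri i) /\ ((3 * t <= i)%N -> (3 * t <= f i)%N).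
  move=> i; have := ltn_ord i; rewrite /f; case: ifP => hi.
    by rewrite /tri; lia.
  case: ifP => ho; lia.
pose h (i : 'I_n.+1) : 'I_n.+1 := inord (f i).
have Hh : forall i, (h i : nat) = f i.
  by move=> i; rewrite /h inordK //; case: (Hf i).
have Hnf : forall j, h j != j.
  by move=> j; rewrite -val_eqE /= Hh; case: (Hf j) => _ [].
apply: leq_trans (minM_le (Wh_inAstar Hnf)) _.
rewrite -Ht3; apply: Mval_le => //.
- by move=> i hi; rewrite Hh; case: (Hf i) => _ [_ [-> //]].
- by move=> i hi; rewrite Hh; case: (Hf i) => _ [_ [_ ->]].
Qed.

Local Close Scope ring_scope.

Theorem theorem1p1 (n : nat) (hn : (0 < n)%N) :
  mu n 2 = ceil_div (2 * n) 3 /\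
  ((2 <= n)%N ->
     mu_star n 2 = (2 * ceil_div n 3)%N /\
     ~~ odd (2 * ceil_div n 3) /\ (mu n 2 <= 2 * ceil_div n 3)%N /\
     (forall k : nat, ~~ odd k -> (mu n 2 <= k)%N -> (2 * ceil_div n 3 <= k)%N)).
Proof.
case: n hn => [//|n] _.
have Emu : mu n.+1 2 = ceil_div (2 * n.+1) 3.
  apply/anti_leq/andP; split.
    by apply: leq_trans (UB1 n) _; rewrite /ceil_div /=; lia.
  by apply: minM_ge => [|W HW]; [rewrite /ceil_div /=; lia | exact: LB1].
split => // hn2.
have Emus : mu_star n.+1 2 = (2 * ceil_div n.+1 3)%N.
  apply/anti_leq/andP; split; first by apply: UB2.
  by apply: minM_ge => [|W HW]; [rewrite /ceil_div /=; lia | exact: LB2].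
rewrite Emu Emus; split => //; split; first by rewrite /ceil_div; lia.
split; first by rewrite /ceil_div /=; lia.
by move=> k; rewrite /ceil_div /=; lia.
Qed.
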